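(* Let $\varphi\colon\mathcal{A}\to\mathcal{A}^*$ be a substitution of constant length $k$. Let $x\in\mathcal{A}^{\mathbf{Z}}$, let $(x^i)_{i\geq0}$ be a sequence of elements of $\mathcal{A}^{\mathbf{Z}}$ and $(c_i)_{i\geq0}$ a sequence of elements of $[0,k-1]$ such that $x^0=x$ and $x^i=T^{c_i}(\varphi(x^{i+1}))$ for all $i\geq0$. Then $$\mathrm{K}_k(x)=\Big\{\Psi_{\mathbf{i}}(x^m): m\geq0,\ \mathbf{i}\in[0,k-1]^m,\ \sum_{l=0}^{m-1}i_{m-l-1}k^l\geq\sum_{l=0}^{m-1}c_lk^l\Big\}\cup\Big\{\Psi_{\mathbf{i}}(T(x^m)): m\geq0,\ \mathbf{i}\in[0,k-1]^m,\ \sum_{l=0}^{m-1}i_{m-l-1}k^l<\sum_{l=0}^{m-1}c_lk^l\Big\}.$$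
   Context: $\varphi$ has constant length $k\geq2$ ($|\varphi(a)|=k$ for all $a$) and acts on $\mathcal{A}^{\mathbf{Z}}$ by concatenation with $\varphi(x_0)$ starting at position $0$; $T$ is the shift $(Tx)_n=x_{n+1}$. For $i\in[0,k-1]$, $\Psi_i\colon\mathcal{A}\to\mathcal{A}$, $a\mapsto\varphi(a)_i$ (the $i$-th letter, indexing from $0$), extended letterwise to $\mathcal{A}^{\mathbf{Z}}$. For $\mathbf{i}=i_0\cdots i_{m-1}\in[0,k-1]^m$, $\Psi_{\mathbf{i}}=\Psi_{i_{m-1}}\circ\cdots\circ\Psi_{i_0}$, and $\Psi_{\mathbf{i}}$ is the identity when $m=0$. The $k$-kernel of a two-sided sequence $x=(x_n)_{n\in\mathbf{Z}}$ is $\mathrm{K}_k(x)=\{(x_{k^mn+i})_{n\in\mathbf{Z}}: m\geq0,\ 0\leq i\leq k^m-1\}$. *)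

(* Defs.v *)
From mathcomp Require Import all_boot all_order all_algebra.
Set Implicit Arguments. Unset Strict Implicit. Unset Printing Implicit Defensive.
Import Order.TTheory GRing.Theory Num.Theory.

Section Defs.
Variable A : Type.

Definition Psi (phi : A -> seq A) (i : nat) (a : A) : A := nth a (phi a) i.

(* Psi_{i_0 ... i_{m-1}} = Psi_{i_{m-1}} o ... o Psi_{i_0}; identity for the empty word *)
Definition Psi_word (phi : A -> seq A) (w : seq nat) (a : A) : A :=
  foldl (fun b i => Psi phi i b) a w.

Definition Psi_seq (phi : A -> seq A) (w : seq nat) (x : int -> A) : int -> A :=
  fun n => Psi_word phi w (x n).

Definition shift (x : int -> A) : int -> A := fun n => x (n + 1)%R.
Definition shiftn (c : nat) (x : int -> A) : int -> A := fun n => x (n + c%:Z)%R.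

(* action of a constant-length-k substitution on A^Z:
   phi(x)_{kn+j} = phi(x_n)_j for 0 <= j < k  (concatenation starting at 0) *)
Definition subst_seq (phi : A -> seq A) (k : nat) (x : int -> A) : int -> A :=
  fun n => Psi phi (absz (n %% k%:Z)%Z) (x (n %/ k%:Z)%Z).

Definition kernel (k : nat) (x : int -> A) : (int -> A) -> Prop :=
  fun y => exists m i : nat, i <= k ^ m - 1 /\
                             y = (fun n : int => x ((k ^ m)%:Z * n + i%:Z)%R).

End Defs.

Definition word_val (k : nat) (w : seq nat) : nat :=
  \sum_(l < size w) nth 0 w (size w - l - 1) * k ^ l.

Definition c_val (k : nat) (c : nat -> nat) (m : nat) : nat :=
  \sum_(l < m) c l * k ^ l.

(* Main.v *)
Require Import Defs.
From mathcomp Require Import all_boot all_order all_algebra.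
From mathcomp Require Import zify ring.
Import GRing.Theory Num.Theory.

Lemma step (A : Type) (phi : A -> seq A) (k : nat) (hk : 2 <= k)
  (xs : nat -> int -> A) (c : nat -> nat)
  (hxs : forall i, xs i = shiftn (c i) (subst_seq phi k (xs i.+1))) m d (n : int) :
  d < k -> xs m (k%:Z * n + d%:Z - (c m)%:Z)%R = Psi phi d (xs m.+1 n).
Proof.
move=> hd; rewrite hxs /shiftn /subst_seq.
have -> : (k%:Z * n + d%:Z - (c m)%:Z + (c m)%:Z = n * k%:Z + d%:Z)%R.
  by rewrite addrNK mulrC.
rewrite divzMDl; last by clear hxs; case: k hk hd.
rewrite modzMDl divz_small ?modz_small ?addr0 //; apply/andP; split => //; lia.
Qed.

Lemma word_val_cons k d w : word_val k (d :: w) = d * k ^ size w + word_val k w.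
Proof.
rewrite /word_val /= big_ord_recr /= addnC.
have -> : (size w).+1 - size w - 1 = 0 by lia.
congr (_ + _); apply: eq_bigr => i _ /=.
have h := ltn_ord i.
by have -> : (size w).+1 - i - 1 = (size w - i - 1).+1 by lia.
Qed.

Lemma c_val_S k c m : c_val k c m.+1 = c_val k c m + c m * k ^ m.
Proof. by rewrite /c_val big_ord_recr. Qed.

Lemma word_val_lt k w : 0 < k -> all (fun i => i <= k - 1) w -> word_val k w < k ^ size w.
Proof.
move=> k0; elim: w => [|d w IH] /=; first by rewrite /word_val big_ord0.
move=> /andP[hd hw]; rewrite word_val_cons expnS.
have := IH hw; set K := k ^ size w => h.
have : d * K <= (k - 1) * K by rewrite leq_mul2r hd orbT.
nia.
Qed.

Lemma c_val_lt k c m : 0 < k -> (forall i, c i <= k - 1) -> c_val k c m < k ^ m.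
Proof.
move=> k0 hc; elim: m => [|m IH]; first by rewrite /c_val big_ord0.
rewrite c_val_S expnS.
have : c m * k ^ m <= (k - 1) * k ^ m by rewrite leq_mul2r hc orbT.
move: IH; set K := k ^ m; nia.
Qed.

Lemma digits k m v : 0 < k -> v < k ^ m ->
  exists w, [/\ size w = m, all (fun i => i <= k - 1) w & word_val k w = v].
Proof.
move=> k0; elim: m v => [|m IH] v hv.
  by exists [::]; split => //; rewrite /word_val big_ord0; rewrite expn0 in hv; lia.
have kp : 0 < k ^ m by rewrite expn_gt0 k0.
have [w [hs ha hv']] := IH (v %% k ^ m) (ltn_pmod _ kp).
exists (v %/ k ^ m :: w); split => /=; first by rewrite hs.
  rewrite ha andbT; rewrite expnS in hv.
  have : v %/ k ^ m < k by rewrite ltn_divLR // mulnC.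
  lia.
by rewrite word_val_cons hv' hs -divn_eq.
Qed.

Lemma main (A : Type) (phi : A -> seq A) (k : nat) (hk : 2 <= k)
  (xs : nat -> int -> A) (c : nat -> nat)
  (hxs : forall i, xs i = shiftn (c i) (subst_seq phi k (xs i.+1))) w (n : int) :
  all (fun i => i <= k - 1) w ->
  xs 0 ((k ^ size w)%:Z * n + (word_val k w)%:Z - (c_val k c (size w))%:Z)%R
  = Psi_word phi w (xs (size w) n).
Proof.
elim: w n => [|d w IH] n /=.
  move=> _; rewrite /word_val /c_val !big_ord0 expn0 mul1r.
  by have -> : (n + 0%Z - 0%Z)%R = n by lia.
move=> /andP[hd hw].
rewrite word_val_cons c_val_S.
have -> : ((k ^ (size w).+1)%:Z * n + (d * k ^ size w + word_val k w)%:Z -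
     (c_val k c (size w) + c (size w) * k ^ size w)%:Z
  = (k ^ size w)%:Z * (k%:Z * n + d%:Z - (c (size w))%:Z) + (word_val k w)%:Z
     - (c_val k c (size w))%:Z)%R.
  rewrite expnS !PoszD !PoszM; ring.
rewrite IH // (@step A phi k hk xs c hxs) //; lia.
Qed.

From Stdlib Require Import FunctionalExtensionality.

Theorem lemma2p7 (A : Type) (phi : A -> seq A) (k : nat)
  (hk : 2 <= k) (hphi : forall a, size (phi a) = k)
  (x : int -> A) (xs : nat -> int -> A) (c : nat -> nat)
  (hc : forall i, c i <= k - 1)
  (hx0 : xs 0 = x)
  (hxs : forall i, xs i = shiftn (c i) (subst_seq phi k (xs i.+1))) :
  forall y : int -> A,
    kernel k x y <->
    ((exists (m : nat) (w : seq nat),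
        [/\ size w = m, all (fun i => i <= k - 1) w,
            word_val k w >= c_val k c m & y = Psi_seq phi w (xs m)])
     \/
     (exists (m : nat) (w : seq nat),
        [/\ size w = m, all (fun i => i <= k - 1) w,
            word_val k w < c_val k c m & y = Psi_seq phi w (shift (xs m))])).
Proof.
have k0 : 0 < k by lia.
move=> y; split.
- case=> m [i [hi ->]].
  have kp : 0 < k ^ m by rewrite expn_gt0 k0.
  have hC := c_val_lt k c m k0 hc.
  move: hi hC kp; set K := k ^ m; set C := c_val k c m => hi hC kp.
  case: (ltnP (i + C) K) => h.
  + have [w [hs ha hv]] := digits k m (i + C) k0 h.
    left; exists m, w; split => //; first by rewrite hv; lia.
    apply: functional_extensionality => n.
    rewrite /Psi_seq -hx0.
    have := main A phi k hk xs c hxs w n ha; rewrite hs hv -/K -/C => <-.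
    congr (xs 0 _); lia.
  + have hl : i + C - K < K by lia.
    have [w [hs ha hv]] := digits k m (i + C - K) k0 hl.
    right; exists m, w; split => //; first by rewrite hv; lia.
    apply: functional_extensionality => n.
    rewrite /Psi_seq /shift -hx0.
    have := main A phi k hk xs c hxs w (n + 1)%R ha; rewrite hs hv -/K -/C => <-.
    congr (xs 0 _); lia.
- case=> [[m [w [hs ha hv ->]]]|[m [w [hs ha hv ->]]]];
  have hw := word_val_lt k w k0 ha; rewrite hs in hw;
  have hC := c_val_lt k c m k0 hc;
  move: hw hC hv; set K := k ^ m; set C := c_val k c m; set v := word_val k w => hw hC hv.
  + exists m, (v - C); split; first by lia.
    apply: functional_extensionality => n.
    rewrite /Psi_seq -hx0.
    have := main A phi k hk xs c hxs w n ha; rewrite hs -/K -/C -/v => <-.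
    congr (xs 0 _); lia.
  + exists m, (v + K - C); split; first by lia.
    apply: functional_extensionality => n.
    rewrite /Psi_seq /shift -hx0.
    have := main A phi k hk xs c hxs w (n + 1)%R ha; rewrite hs -/K -/C -/v => <-.
    congr (xs 0 _); lia.
Qed.
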